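(* In the storage model of the context, suppose the linear system \[ \sum_{j=1}^{\kappa_i}\alpha_{ij}=\lambda_i\ (i=1,\dots,\mathcal K),\qquad \sum_{i=1}^{\mathcal K}\sum_{j=1}^{\kappa_i}\alpha_{ij}\,\delta_{\ell,s^i_j}=\tfrac1n\ (\ell=1,\dots,n) \] has a positive solution $(\alpha_{ij})$, let $0<\varepsilon<\min_{i,j}\alpha_{ij}$, and let the embedded load chain $X^e(m)$ be constructed using the $\varepsilon$-PSERP. Then for every $x\in\mathbb N^n$, \[ \mathbf E[f(X^e(m+1))-f(X^e(m))\mid X^e(m)=x]=-2\varepsilon\sum_{i=1}^{\mathcal K}\bigl(x_{s^i_{j_{\max}}(x)}-x_{s^i_{j_{\min}}(x)}\bigr)+1-\frac1n, \] where $f(y)=\sum_{l=1}^n\bigl(y_l-\frac1n\sum_{k=1}^ny_k\bigr)^2$.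
   Context: Storage model: $n$ nodes, non-empty neighborhoods $S_1,\dots,S_{\mathcal K}\subset\{1,\dots,n\}$ covering $\{1,\dots,n\}$, $\kappa_i=|S_i|$, $S_i=\{s^i_1,\dots,s^i_{\kappa_i}\}$ a fixed enumeration. Items arrive at $S_i$ as independent Poisson processes with rates $\lambda_i>0$, $\sum_i\lambda_i=1$; each item is stored at one node of its neighborhood according to the routing policy, independently across arrivals. $X^e(m)\in\mathbb N^n$ is the vector of node loads after the $m$-th arrival. For $x\in\mathbb N^n$, $s^i_{j_{\min}}(x)$ is the first node of $S_i$ (in the enumeration) at which $x$ is minimal over $S_i$, and $s^i_{j_{\max}}(x)$ is the last node of $S_i$ at which $x$ is maximal over $S_i$. $\varepsilon$-PSERP: an item arriving at $S_i$ when the configuration is $x$ is sent to $s^i_j$ with probability $(\alpha_{ij}+\varepsilon)/\lambda_i$ if $s^i_j=s^i_{j_{\min}}(x)$, $(\alpha_{ij}-\varepsilon)/\lambda_i$ if $s^i_j=s^i_{j_{\max}}(x)$, and $\alpha_{ij}/\lambda_i$ otherwise; if $\kappa_i=1$ the item goes to the unique node of $S_i$. $\delta_{\ell,m}$ is the Kronecker delta. *)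

(* Defs.v *)
From mathcomp Require Import all_boot all_order all_algebra.
Set Implicit Arguments. Unset Strict Implicit. Unset Printing Implicit Defensive.
Import Order.TTheory GRing.Theory Num.Theory.
Local Open Scope ring_scope.

(* Nodes are 'I_n (0-based).  Neighborhood i : 'I_K is enumerated by the tuple
   S i : (kappa i).-tuple 'I_n, so s^i_j = tnth (S i) j for j : 'I_(kappa i). *)

Section Defs.
Variables (n K : nat) (kappa : 'I_K -> nat) (S : forall i, (kappa i).-tuple 'I_n).

Definition loads (i : 'I_K) (x : 'I_n -> nat) : seq nat := map x (S i).

Definition jmin (i : 'I_K) (x : 'I_n -> nat) : nat :=
  let L := loads i x in find (fun v => all (fun w => (v <= w)%N) L) L.

(* j_max(x): last index (0-based) of S_i at which x is maximal over S_i *)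
Definition jmax (i : 'I_K) (x : 'I_n -> nat) : nat :=
  let L := loads i x in
  ((size L).-1 - find (fun v => all (fun w => (w <= v)%N) L) (rev L))%N.

Definition xmin (i : 'I_K) (x : 'I_n -> nat) : nat := nth 0%N (loads i x) (jmin i x).
Definition xmax (i : 'I_K) (x : 'I_n -> nat) : nat := nth 0%N (loads i x) (jmax i x).

Definition add_item (x : 'I_n -> nat) (l : 'I_n) : 'I_n -> nat :=
  fun k => (x k + (k == l))%N.

Variable R : realFieldType.

(* epsilon-PSERP: probability that an item arriving at S_i, when the
   configuration is x, is stored at s^i_j. *)
Definition pserp (alpha : forall i, 'I_(kappa i) -> R) (lam : 'I_K -> R) (eps : R)
  (x : 'I_n -> nat) (i : 'I_K) (j : 'I_(kappa i)) : R :=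
  if kappa i == 1%N then 1
  else if (j : nat) == jmin i x then (alpha i j + eps) / lam i
  else if (j : nat) == jmax i x then (alpha i j - eps) / lam i
  else alpha i j / lam i.

(* One step of the embedded chain X^e: the next arrival (superposition of the
   independent Poisson processes with rates lam i, sum lam = 1) comes from
   neighborhood S_i with probability lam i; it is then routed to s^i_j with
   probability route x i j.  Hence, for g : N^n -> R,
   E[g(X^e(m+1)) | X^e(m) = x] = embedded_cond_exp route g x. *)
Definition embedded_cond_exp (lam : 'I_K -> R)
  (route : ('I_n -> nat) -> forall i : 'I_K, 'I_(kappa i) -> R)
  (g : ('I_n -> nat) -> R) (x : 'I_n -> nat) : R :=
  \sum_(i < K) \sum_(j < kappa i) lam i * route x i j * g (add_item x (tnth (S i) j)).

End Defs.

Definition fdisp (R : realFieldType) (n : nat) (y : 'I_n -> nat) : R :=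
  \sum_(l < n) ((y l)%:R - n%:R^-1 * \sum_(k < n) (y k)%:R) ^+ 2.

(* Main.v *)
Require Import Defs.
From mathcomp Require Import all_boot all_order all_algebra.
From mathcomp Require Import ring lra zify.
Import Order.TTheory GRing.Theory Num.Theory.
Import Order.TTheory GRing.Theory Num.Theory.

Definition Pm (s : seq nat) := fun v => all (fun w => (v <= w)%N) s.
Definition PM (s : seq nat) := fun v => all (fun w => (w <= v)%N) s.

Lemma has_Pm (s t : seq nat) : (0 < size t)%N -> {subset s <= t} -> {subset t <= s} -> has (Pm s) t.
Proof.
elim: t s => [|a t IH] s //= _ st ts.
case: t IH st ts => [|b t] IH st ts.
  apply/orP; left; apply/allP => w /st; rewrite inE => /eqP ->; done.
have := IH (b :: t) isT (fun z h => h) (fun z h => h).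
case/hasP => v vin /allP vP.
apply/orP.
have [av|va] := leqP a v.
  left; apply/allP => w /st; rewrite inE => /orP [/eqP->//|/vP]. exact: leq_trans.
right; apply/hasP; exists v => //; apply/allP => w /st; rewrite inE => /orP [/eqP->|/vP//].
exact: ltnW.
Qed.

Lemma has_PM (s t : seq nat) : (0 < size t)%N -> {subset s <= t} -> {subset t <= s} -> has (PM s) t.
Proof.
elim: t s => [|a t IH] s //= _ st ts.
case: t IH st ts => [|b t] IH st ts.
  apply/orP; left; apply/allP => w /st; rewrite inE => /eqP ->; done.
have := IH (b :: t) isT (fun z h => h) (fun z h => h).
case/hasP => v vin /allP vP.
apply/orP.
have [av|va] := leqP a v.
  right; apply/hasP; exists v => //; apply/allP => w /st; rewrite inE => /orP [/eqP->//|/vP//].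
left; apply/allP => w /st; rewrite inE => /orP [/eqP->//|/vP] h. apply: leq_trans h _. exact: ltnW.
Qed.

Definition jm (s : seq nat) := find (Pm s) s.
Definition jM (s : seq nat) := ((size s).-1 - find (PM s) (rev s))%N.

Lemma jm_lt s : (0 < size s)%N -> (jm s < size s)%N.
Proof. by move=> h; rewrite /jm -has_find; apply: has_Pm. Qed.

Lemma jM_lt s : (0 < size s)%N -> (jM s < size s)%N.
Proof. move=> h; rewrite /jM; lia. Qed.

Lemma find0 (p : pred nat) s : p (nth 0%N s 0) -> (0 < size s)%N -> find p s = 0%N.
Proof. by case: s => //= a t ->. Qed.

Lemma jm_neq_jM s : (1 < size s)%N -> jm s != jM s.
Proof.
move=> h; apply/eqP => E.
have s0 : (0 < size s)%N by lia.
have hm : has (Pm s) s by apply: has_Pm.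
have hM : has (PM s) (rev s) by apply: has_PM; rewrite ?size_rev // => z; rewrite mem_rev.
have fM : (find (PM s) (rev s) < size s)%N by rewrite -(size_rev s) -has_find.
have Pmj := nth_find 0%N hm.
have PMj := nth_find 0%N hM.
rewrite nth_rev // in PMj.
have e1 : (size s - (find (PM s) (rev s)).+1 = jM s)%N by rewrite /jM; lia.
rewrite e1 -E in PMj.
set v := nth 0%N s (find (Pm s) s) in Pmj PMj.
have allv : forall w, w \in s -> w = v.
  move=> w ws; apply/eqP; rewrite eqn_leq; apply/andP; split.
    by move/allP: PMj; apply.
  by move/allP: Pmj; apply.
have j0 : jm s = 0%N.
  apply: find0 => //; apply/allP => w ws.
  by rewrite (allv _ ws) (allv (nth 0%N s 0)) // mem_nth.
have j1 : find (PM s) (rev s) = 0%N.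
  apply: find0; last by rewrite size_rev.
  apply/allP => w ws.
  rewrite (allv _ ws) (allv (nth 0%N (rev s) 0)) //; by rewrite -mem_rev mem_nth // size_rev.
move: E; rewrite j0 /jM j1; lia.
Qed.
Local Open Scope ring_scope.
Lemma sum_delta (R : pzRingType) (n : nat) (l : 'I_n) (F : 'I_n -> R) :
  \sum_(k < n) (k == l)%:R * F k = F l.
Proof.
rewrite (bigD1 l) //= eqxx mul1r big1 ?addr0 // => k /negbTE ->; by rewrite mul0r.
Qed.

Lemma fdispE (R : realFieldType) n (y : 'I_n -> nat) : (0 < n)%N ->
  fdisp R y = \sum_(l < n) (y l)%:R ^+ 2 - n%:R^-1 * (\sum_(k < n) (y k)%:R) ^+ 2.
Proof.
move=> n0; rewrite /fdisp; set T := \sum_(k < n) _.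
under eq_bigr do rewrite sqrrB.
rewrite !big_split /= sumrN sumr_const card_ord.
rewrite (_ : \sum_(i < n) (y i)%:R * (n%:R^-1 * T) *+ 2 = T * (n%:R^-1 * T) *+ 2); last first.
  by rewrite sumrMnl mulr_suml.
have nz : n%:R != 0 :> R by rewrite pnatr_eq0 -lt0n.
rewrite -[_ *+ n]mulr_natr. field. done.
Qed.

Lemma fdelta (R : realFieldType) n (x : 'I_n -> nat) l : (0 < n)%N ->
  fdisp R (add_item x l) - fdisp R x =
  2 * (x l)%:R + 1 - (2 * \sum_(k < n) (x k)%:R + 1) / n%:R.
Proof.
move=> n0; rewrite !fdispE //= /add_item.
under eq_bigr do rewrite natrD sqrrD.
under [X in _ - _ * X ^+ 2]eq_bigr do rewrite natrD.
rewrite !big_split /=.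
have e1 : \sum_(i < n) (i == l)%:R ^+ 2 = 1 :> R.
  under eq_bigr => k _ do rewrite expr2. by rewrite sum_delta eqxx.
have e2 : \sum_(i < n) (i == l)%:R = 1 :> R.
  have := @sum_delta R n l (fun _ => 1). by under eq_bigr => k _ do rewrite mulr1.
have e3 : \sum_(i < n) (x i)%:R * (i == l)%:R = (x l)%:R :> R.
  under eq_bigr => k _ do rewrite mulrC. by rewrite sum_delta.
rewrite e1 e2 e3.
have nz : n%:R != 0 :> R by rewrite pnatr_eq0 -lt0n.
field. done.
Qed.

Section Main.
Variables (R : realFieldType) (n K : nat) (kappa : 'I_K -> nat)
  (S : forall i : 'I_K, (kappa i).-tuple 'I_n).

Lemma jmin_lt i x : (0 < kappa i)%N -> (jmin S i x < kappa i)%N.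
Proof. move=> h; have := @jm_lt (loads S i x); by rewrite /loads size_map size_tuple; apply. Qed.
Lemma jmax_lt i x : (0 < kappa i)%N -> (jmax S i x < kappa i)%N.
Proof. move=> h; have := @jM_lt (loads S i x); by rewrite /loads size_map size_tuple; apply. Qed.
Lemma jmin_neq i x : (1 < kappa i)%N -> jmin S i x != jmax S i x.
Proof. move=> h; have := @jm_neq_jM (loads S i x); by rewrite /loads size_map size_tuple; apply. Qed.

Lemma xminE i x (h : (0 < kappa i)%N) :
  xmin S i x = x (tnth (S i) (Ordinal (jmin_lt i x h))).
Proof.
rewrite /xmin /loads (nth_map (tnth (S i) (Ordinal (jmin_lt i x h)))) ?size_tuple ?jmin_lt //.
by rewrite [in RHS](tnth_nth (tnth (S i) (Ordinal (jmin_lt i x h)))) /=.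
Qed.
Lemma xmaxE i x (h : (0 < kappa i)%N) :
  xmax S i x = x (tnth (S i) (Ordinal (jmax_lt i x h))).
Proof.
rewrite /xmax /loads (nth_map (tnth (S i) (Ordinal (jmax_lt i x h)))) ?size_tuple ?jmax_lt //.
by rewrite [in RHS](tnth_nth (tnth (S i) (Ordinal (jmax_lt i x h)))) /=.
Qed.

Lemma per_i (lam : 'I_K -> R) (alpha : forall i : 'I_K, 'I_(kappa i) -> R) (eps : R)
  i x (c : R) : (0 < kappa i)%N -> 0 < lam i -> \sum_(j < kappa i) alpha i j = lam i ->
  \sum_(j < kappa i) lam i * pserp S alpha lam eps x j * (2 * (x (tnth (S i) j))%:R + c)
  = \sum_(j < kappa i) alpha i j * (2 * (x (tnth (S i) j))%:R + c)
    - 2 * eps * ((xmax S i x)%:R - (xmin S i x)%:R).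
Proof.
move=> k0 l0 sa.
rewrite (xminE i x k0) (xmaxE i x k0).
set jmo := Ordinal (jmin_lt i x k0); set jMo := Ordinal (jmax_lt i x k0).
set g := fun j : 'I_(kappa i) => 2 * (x (tnth (S i) j))%:R + c.
have lnz : lam i != 0 by rewrite gt_eqF.
case: (eqVneq (kappa i) 1%N) => k1.
  have allj : forall j : 'I_(kappa i), j = jmo.
    move=> j; apply: val_inj => /=; have := ltn_ord j; have := jmin_lt i x k0; move: (j : nat) (jmin S i x); rewrite k1; lia.
  have eM : jMo = jmo by apply: allj.
  rewrite eM subrr mulr0 subr0.
  have la : lam i = alpha i jmo.
    by rewrite -sa (bigD1 jmo) //= big1 ?addr0 // => j; rewrite (allj j) eqxx.
  apply: eq_bigr => j _.
  by rewrite /pserp (_ : (kappa i == 1%N) = true) ?k1 // mulr1 la (allj j).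
have k2 : (1 < kappa i)%N by rewrite ltn_neqAle eq_sym k1 k0.
have neq : jmo != jMo := jmin_neq i x k2.
have ex : forall j, lam i * pserp S alpha lam eps x j
   = alpha i j + eps * (j == jmo)%:R - eps * (j == jMo)%:R.
  move=> j; rewrite /pserp (negbTE k1).
  have -> : ((j:nat) == jmin S i x) = (j == jmo) by [].
  have -> : ((j:nat) == jmax S i x) = (j == jMo) by [].
  case: (eqVneq j jmo) => [->|hm].
    rewrite (negbTE neq) /=; field; done.
  case: (eqVneq j jMo) => [->|hM] /=; field; done.
under eq_bigr do rewrite ex !mulrDl mulNr -!mulrA.
rewrite !big_split /= sumrN -!mulr_sumr !sum_delta.
rewrite -/(g jmo) -/(g jMo) /g.
rewrite [X in X + _ - _ = _](_ : _ = \sum_(j < kappa i) alpha i j * (2 * (x (tnth (S i) j))%:R + c)).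
  ring.
by apply: eq_bigr => j _; ring.
Qed.

End Main.

Lemma mix (R : realFieldType) (n K : nat) (kappa : 'I_K -> nat)
  (S : forall i : 'I_K, (kappa i).-tuple 'I_n) (alpha : forall i : 'I_K, 'I_(kappa i) -> R)
  (x : 'I_n -> nat) :
  (forall l : 'I_n,
     \sum_(i < K) \sum_(j < kappa i) alpha i j * (l == tnth (S i) j)%:R = n%:R^-1) ->
  \sum_(i < K) \sum_(j < kappa i) alpha i j * (x (tnth (S i) j))%:R
  = n%:R^-1 * \sum_(l < n) (x l)%:R.
Proof.
move=> H.
have e : forall i (j : 'I_(kappa i)), alpha i j * (x (tnth (S i) j))%:R =
   \sum_(l < n) alpha i j * (l == tnth (S i) j)%:R * (x l)%:R.
  by move=> i j; rewrite -(@sum_delta R n (tnth (S i) j) (fun l => (x l)%:R)) mulr_sumr;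
     apply: eq_bigr => l _; rewrite mulrA.
under eq_bigr do under eq_bigr do rewrite e.
under eq_bigr do rewrite exchange_big /=.
rewrite exchange_big /= mulr_sumr; apply: eq_bigr => l _.
rewrite -(H l) mulr_suml; apply: eq_bigr => i _; by rewrite mulr_suml.
Qed.

Theorem lemma3p1 (R : realFieldType) (n K : nat) (kappa : 'I_K -> nat)
  (S : forall i : 'I_K, (kappa i).-tuple 'I_n)
  (lam : 'I_K -> R) (alpha : forall i : 'I_K, 'I_(kappa i) -> R) (eps : R) :
  (forall i, (0 < kappa i)%N) ->
  (forall i, uniq (S i)) ->
  (forall l : 'I_n, exists i : 'I_K, l \in (S i : seq 'I_n)) ->
  (forall i, 0 < lam i) ->
  \sum_(i < K) lam i = 1 ->
  (forall i j, 0 < alpha i j) ->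
  (forall i, \sum_(j < kappa i) alpha i j = lam i) ->
  (forall l : 'I_n,
     \sum_(i < K) \sum_(j < kappa i) alpha i j * (l == tnth (S i) j)%:R = n%:R^-1) ->
  0 < eps ->
  (forall i j, eps < alpha i j) ->
  forall x : 'I_n -> nat,
    embedded_cond_exp S lam (pserp S alpha lam eps)
      (fun y => fdisp R y - fdisp R x) x
    = - 2 * eps * \sum_(i < K) ((xmax S i x)%:R - (xmin S i x)%:R) + 1 - n%:R^-1.
Proof.
move=> k0 _ _ l0 sl _ sa H _ _ x.
have n0 : (0 < n)%N.
  case: (pickP (fun _ : 'I_K => true)) => [i0 _|h].
    exact: (leq_ltn_trans (leq0n _) (ltn_ord (tnth (S i0) (Ordinal (k0 i0))))).
  rewrite big1 in sl; last by move=> i; have := h i.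
  by move/eqP: sl; rewrite eq_sym oner_eq0.
have nz : n%:R != 0 :> R by rewrite pnatr_eq0 -lt0n.
pose T : R := \sum_(k < n) (x k)%:R.
pose c : R := 1 - (2 * T + 1) / n%:R.
rewrite /embedded_cond_exp.
under eq_bigr => i _ do under eq_bigr => j _ do rewrite fdelta // -addrA -/T -/c.
under eq_bigr => i _ do rewrite per_i //.
rewrite sumrB -mulr_sumr.
under eq_bigr do under eq_bigr do rewrite mulrDr mulrCA.
under eq_bigr do rewrite big_split /= -mulr_sumr.
rewrite big_split /= -mulr_sumr.
rewrite (_ : \sum_(i < K) \sum_(i0 < kappa i) alpha i i0 * c = c).
  rewrite mix // /c /T; field; done.
under eq_bigr do rewrite -mulr_suml sa.
by rewrite -mulr_suml sl mul1r.
Qed.
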